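(* Let $k\ge 1$. Suppose $k$ symbols $\circ$ and $k+2$ symbols $\bullet$ are placed at $2k+2$ pairwise distinct points of a circle in such a way that between any two adjacent $\circ$'s there are at most two $\bullet$'s. Then, reading the symbols around the circle in counterclockwise cyclic order, there exist consecutive symbols forming the pattern $$\bullet\,\bullet\,\underbrace{\circ\,\bullet\,\circ\,\bullet\cdots\circ\,\bullet}_{(\circ\,\bullet)^n}\,\bullet$$ for some $n\ge 1$.
   Context: Two $\circ$'s are called adjacent if, traversing the circle from one to the other in counterclockwise direction, no other $\circ$ is encountered; the condition bounds the number of $\bullet$'s encountered on each such arc. *)

(* Defs.v *)
From mathcomp Require Import all_boot.
Set Implicit Arguments. Unset Strict Implicit. Unset Printing Implicit Defensive.

(* A placement of symbols at 2k+2 distinct points of a circle is encoded by the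
   cyclic word read counterclockwise from an arbitrary starting point:
   [s : seq bool], with [true] = white circle (o) and [false] = bullet (•).
   Cyclic consecutive readings are the infixes of the rotations [rot i s]. *)

(* Number of bullets encountered going counterclockwise from the o at
   position i until the next o (the next o is the same one if it is alone). *)
Definition gap_after (s : seq bool) (i : nat) : nat :=
  find id (behead (rot i s)).

Definition adjacent_gaps_le2 (s : seq bool) : Prop :=
  forall i, i < size s -> nth false s i -> gap_after s i <= 2.

Definition pattern (n : nat) : seq bool :=
  [:: false; false] ++ flatten (nseq n [:: true; false]) ++ [:: false].

Definition occurs_cyclically (p s : seq bool) : Prop :=
  exists2 i, i < size s & infix p (rot i s).

(* Main.v *)
Require Import Defs.
From mathcomp Require Import all_boot.
From mathcomp Require Import zify.

Lemma flatten_nseqS (m : nat) (x : seq bool) :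
  flatten (nseq m.+1 x) = flatten (nseq m x) ++ x.
Proof.
elim: m => [|m IH]; first by rewrite /= cats0.
rewrite -[nseq m.+2 x]/(x :: nseq m.+1 x) -[flatten (x :: _)]/(x ++ flatten (nseq m.+1 x)) {1}IH catA.
by [].
Qed.

Section Core.
Variable S : seq bool.
Hypothesis noF3 : ~~ infix [:: false; false; false] S.
Let concl := exists2 n, 1 <= n & infix (pattern n) S.

Lemma coreAB n :
  (forall w m, size w <= n ->
     infix ([:: false; false] ++ flatten (nseq m [:: true; false]) ++ w) S ->
     last false w -> count id w <= count negb w -> concl) /\
  (forall w, size w <= n -> infix (true :: w) S -> last true w ->
     (count id w).+2 <= count negb w -> concl).
Proof.
elim: n => [|n IH].
  split.
    by case=> // w m _ _.
  by case=> //.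
have [IHA IHB] := IH.
split.
- move=> [|[|] w] m Hs Hi Hl Hc //.
  + case: w Hs Hi Hl Hc => [|[|] w] Hs Hi Hl Hc //.
    *
      have H1 : size w <= n by simpl in Hs; lia.
      apply: (IHB w H1) => //; try (move: Hc => /=; lia).
      apply: infix_trans Hi; rewrite catA.
      by apply: (infix_trans _ (suffix_infix _ _)); apply: infix_cons.
    * case: w Hs Hi Hl Hc => [|[|] w] Hs Hi Hl Hc //.
      --
         have H1 : size (true :: w) <= n by rewrite /=; simpl in Hs; lia.
         apply: (IHA (true :: w) m.+1 H1) => //; try (move: Hc => /=; lia).
         by rewrite flatten_nseqS -catA.
      --
         exists m.+1 => //.
         apply: infix_trans Hi.
         have -> : [:: false; false] ++ flatten (nseq m [:: true; false]) ++ [:: true, false, false & w] = pattern m.+1 ++ w.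
           by rewrite /pattern flatten_nseqS -!catA.
         exact: prefix_infix.
  +
    case: m Hi => [|m] Hi.
      have Hf : infix [:: false; false; false] S by apply: infix_trans Hi; exact: (prefix_infix [:: false; false; false] w).
      by move: noF3; rewrite Hf.
    exists m.+1 => //.
    apply: infix_trans Hi.
    have -> : [:: false; false] ++ flatten (nseq m.+1 [:: true; false]) ++ false :: w = pattern m.+1 ++ w.
      by rewrite /pattern -!catA.
    exact: prefix_infix.
- move=> [|[|] w] Hs Hi Hl Hc //.
  + have H1 : size w <= n by simpl in Hs; lia.
    apply: (IHB w H1) => //; try (move: Hc => /=; lia).
    by apply: infix_trans Hi; apply: infix_cons.
  + case: w Hs Hi Hl Hc => [|[|] w] Hs Hi Hl Hc //.
    * have H1 : size w <= n by simpl in Hs; lia.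
      apply: (IHB w H1) => //; try (move: Hc => /=; lia).
      by apply: infix_trans Hi; apply: (infix_trans (infix_cons _ _)); apply: infix_cons.
    * have H1 : size w <= n by simpl in Hs; lia.
      apply: (IHA w 0 H1) => //; try (move: Hc => /=; lia).
      by apply: infix_trans Hi; apply: infix_cons.
Qed.
End Core.

Lemma coreC (S : seq bool) : ~~ infix [:: false; false; false] S ->
  forall u, infix u S -> last false u -> (count id u).+2 <= count negb u ->
  exists2 n, 1 <= n & infix (pattern n) S.
Proof.
move=> noF3 [|[|] w] Hi Hl Hc //.
- apply: ((@coreAB S noF3 (size w)).2 w (leqnn _) Hi) => //.
  by move: Hc => /=; lia.
- case: w Hi Hl Hc => [|[|] w] Hi Hl Hc //.
  + apply: ((@coreAB S noF3 (size w)).2 w (leqnn _)) => //.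
    all: try (move: Hc => /=; lia).
    by apply: infix_trans Hi; apply: infix_cons.
  + apply: ((@coreAB S noF3 (size w)).1 w 0 (leqnn _)) => //.
    all: try (move: Hc => /=; lia).
Qed.

Lemma last_true_split (x : seq bool) : has id x ->
  exists c d, x = c ++ true :: d /\ ~~ has id d.
Proof.
elim: x => [|y x IH] //= H.
case Hx: (has id x).
  have [c [d [-> Hd]]] := IH Hx.
  by exists (y :: c), d.
exists [::], x; split => //; last by rewrite Hx.
by move: H; rewrite Hx orbF => /= ->.
Qed.

Lemma rot_small (s : seq bool) m : 0 < size s ->
  exists2 r, r < size s & rot m s = rot r s.
Proof.
move=> Hs.
case: (ltnP m (size s)) => Hm; first by exists m.
by exists 0 => //; rewrite rot_oversize // rot0.
Qed.

Lemma gap_contra (s : seq bool) : adjacent_gaps_le2 s ->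
  forall r d c, rot r s = true :: d ++ [:: false; false; false] ++ c ->
  ~~ has id d -> False.
Proof.
move=> Hg r d c Hr Hd.
have Hs : 0 < size s by rewrite -(size_rot r) Hr.
have [r' Hr' Er] := @rot_small s r Hs.
rewrite Er in Hr.
have Hn : nth false s r' by rewrite /rot (drop_nth false Hr') in Hr; case: Hr => ->.
have := Hg r' Hr' Hn.
rewrite /gap_after Hr /= find_cat (negbTE Hd) /=.
lia.
Qed.

Theorem mainTheorem4 (k : nat) (s : seq bool) :
  1 <= k ->
  size s = (2 * k + 2)%N ->
  count id s = k ->
  count negb s = k + 2 ->
  adjacent_gaps_le2 s ->
  exists2 n, 1 <= n & occurs_cyclically (pattern n) s.
Proof.
move=> Hk Hsz Ht Hf Hg.
have Hin : true \in s.
  have : has id s by rewrite has_count Ht.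
  by case/hasP => x Hx Hxt; move: Hxt Hx => /= ->.
set j := index true s.
have Hj : j < size s by rewrite index_mem.
have Es : s = rcons (take j s) true ++ drop j.+1 s.
  by rewrite -cats1 -catA /= -{1}(nth_index false Hin) -(drop_nth false Hj) cat_take_drop.
set u := drop j.+1 s ++ rcons (take j s) true.
have Hu : rot j.+1 s = u.
  have Hsz1 : size (rcons (take j s) true) = j.+1 by rewrite size_rcons size_take Hj.
  by rewrite {1}Es -{1}Hsz1 rot_size_cat.
have Hlast : last false u by rewrite /u last_cat last_rcons.
have Hcnt : forall a, count a u = count a s.
  by move=> a; rewrite -Hu; apply/permP; rewrite perm_rot.
have noF3 : ~~ infix [:: false; false; false] u.
  apply/negP => /infixP [a [b Eu]].
  have Hb : has id b.
    move: Hlast; rewrite Eu last_cat /=.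
    case: b {Eu} => [|y b] // Hl.
    by apply/hasP; exists (last y b) => //; apply: mem_last.
  have [c [d [Ecd Hd]]] := @last_true_split (b ++ a) (ltac:(by rewrite has_cat Hb)).
  have E1 : rot (size (a ++ [:: false; false; false])) u = c ++ true :: d ++ [:: false; false; false].
    by rewrite Eu catA rot_size_cat catA Ecd -catA.
  have E2 : rot (size c) (rot (size (a ++ [:: false; false; false])) (rot j.+1 s)) = true :: d ++ [:: false; false; false] ++ c.
    by rewrite Hu E1 rot_size_cat /= -catA.
  rewrite !rot_rot_add in E2.
  exact: (@gap_contra s Hg _ _ _ E2 Hd).
have [n Hn Hinf] := @coreC u noF3 u (infix_refl u) Hlast (ltac:(rewrite !Hcnt; lia)).
exists n => //.
have Hs0 : 0 < size s by rewrite Hsz; lia.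
have [i Hi Ei] := @rot_small s j.+1 Hs0.
by exists i => //; rewrite -Ei Hu.
Qed.
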